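(* Let $m\ge1$, $n=2m$, $1\le k\le n$. Let $g\in\mathbb{F}_{q^n}$ be a normal element over $\mathbb{F}_q$, $\bm{g}=(g^{q^{n-1}},\dots,g^{q},g)$, and $G=\mathcal{P}_k(\bm{g})$. Let $M\in GL_n(\mathbb{F}_{q^n})$ be a circulant matrix. Let $\varphi:\mathbb{F}_{q^n}\to\mathbb{F}_{q^n}$ be an $\mathbb{F}_{q^m}$-linear automorphism that is fully linear over $\mathbb{F}_{q^n}$ (with respect to the base field $\mathbb{F}_{q^m}$). Then $\varphi(M)$ is invertible and there exists $j\in\{0,1\}$ such that $\varphi(GM)\varphi(M)^{-1}=G^{(q^{mj})}$, where $G^{(q^{mj})}$ denotes the matrix obtained by raising every entry of $G$ to the power $q^{mj}$.
   Context: $q$ is a prime power (the paper takes $q$ a power of $2$). $g\in\mathbb{F}_{q^n}$ is normal over $\mathbb{F}_q$ if $g,g^q,\dots,g^{q^{n-1}}$ form an $\mathbb{F}_q$-basis of $\mathbb{F}_{q^n}$. For $\bm{v}=(v_0,\dots,v_{n-1})$, the circulant matrix $\mathcal{P}_n(\bm{v})$ is the $n\times n$ matrix whose first row is $\bm{v}$ and whose $(i+1)$-th row is the cyclic right shift of the $i$-th row, i.e. rows $(v_0,\dots,v_{n-1}),(v_{n-1},v_0,\dots,v_{n-2}),\dots,(v_1,\dots,v_{n-1},v_0)$; $\mathcal{P}_k(\bm{v})$ is the matrix of its first $k$ rows. $\varphi$ is applied entrywise to matrices. An $\mathbb{F}_{q^m}$-linear automorphism $\varphi$ of $\mathbb{F}_{q^n}$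 (a bijective $\mathbb{F}_{q^m}$-linear map) is fully linear over $\mathbb{F}_{q^n}$ if for every length $N$ and every $\mathbb{F}_{q^n}$-linear code $\mathcal{C}\subseteq\mathbb{F}_{q^n}^N$, the set $\varphi(\mathcal{C})=\{\varphi(\bm{c}):\bm{c}\in\mathcal{C}\}$ (componentwise application) is again $\mathbb{F}_{q^n}$-linear. *)

(* Defs.v *)
From HB Require Import structures.
From mathcomp Require Import all_boot all_order all_algebra all_field.
Set Implicit Arguments. Unset Strict Implicit. Unset Printing Implicit Defensive.
Import GRing.Theory.
Local Open Scope ring_scope.

(* Setting: L : finFieldType with #|L| = q^n plays F_{q^n}; the subfield
   F_{q^e} of L is { x | x ^+ q^e = x }. *)

Definition in_subfield (L : fieldType) (Q : nat) (x : L) : Prop := x ^+ Q = x.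

Definition normal_elt (L : fieldType) (q n : nat) (g : L) : Prop :=
  (forall c : 'I_n -> L, (forall i, in_subfield q (c i)) ->
     \sum_(i < n) c i * g ^+ (q ^ i) = 0 -> forall i, c i = 0) /\
  (forall x : L, exists c : 'I_n -> L, (forall i, in_subfield q (c i)) /\
     x = \sum_(i < n) c i * g ^+ (q ^ i)).

Lemma cidx_subproof n (j : 'I_n) (i : nat) : ((j + n - i) %% n < n)%N.
Proof. by apply: ltn_pmod; apply: leq_ltn_trans (ltn_ord j). Qed.

Definition cidx n (i : nat) (j : 'I_n) : 'I_n := Ordinal (cidx_subproof j i).

(* P_k(v): first k rows of the circulant matrix whose first row is v and whose
   (i+1)-th row is the cyclic right shift of the i-th row:
   entry (i, j) = v_{(j - i) mod n} *)
Definition circP (L : Type) (k n : nat) (v : 'rV[L]_n) : 'M[L]_(k, n) :=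
  \matrix_(i < k, j < n) v 0 (cidx i j).

Definition is_circulant (L : Type) (n : nat) (M : 'M[L]_n) : Prop :=
  exists v : 'rV[L]_n, M = circP n v.

Definition gvec (L : fieldType) (q n : nat) (g : L) : 'rV[L]_n :=
  \row_(j < n) g ^+ (q ^ (n - 1 - j)).

Definition lin_automorphism (L : fieldType) (Q : nat) (phi : L -> L) : Prop :=
  bijective phi /\ (forall x y, phi (x + y) = phi x + phi y) /\
  (forall a x, in_subfield Q a -> phi (a * x) = a * phi x).

Definition lin_code (L : finFieldType) (N : nat) (C : {set 'rV[L]_N}) : Prop :=
  0 \in C /\ (forall (a : L) x y, x \in C -> y \in C -> a *: x + y \in C).

Definition fully_linear (L : finFieldType) (phi : L -> L) : Prop :=
  forall (N : nat) (C : {set 'rV[L]_N}), lin_code C ->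
    lin_code [set map_mx phi c | c in C].

(* Main.v *)
Require Import Defs.
From HB Require Import structures.
From mathcomp Require Import all_boot all_order all_algebra all_field.
From mathcomp Require abelian pgroup.
From mathcomp Require Import ring.
Import GRing.Theory.
Local Open Scope ring_scope.

Lemma frobQ (L : finFieldType) (q n m : nat) : #|L| = (q ^ n)%N -> (0 < n)%N ->
  forall x y : L, (x + y) ^+ (q ^ m) = x ^+ (q ^ m) + y ^+ (q ^ m).
Proof.
move=> hc n0 x y; apply: exprDn_pchar.
have [p pr pc] := finPcharP L.
rewrite (eq_pnat _ (pcharf_eq pc)).
have := abelian.abelem_pgroup (abelian.fin_ring_pchar_abelem pc).
rewrite /pgroup.pgroup cardsT hc pnatX => /orP[hq|]; last by rewrite eqn0Ngt n0.
by rewrite pnatX hq.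
Qed.

Lemma phi0 (L : fieldType) (phi : L -> L) :
  (forall x y, phi (x + y) = phi x + phi y) -> phi 0 = 0.
Proof. by move=> hadd; apply/(addrI (phi 0)); rewrite -hadd !addr0. Qed.

Lemma key (L : finFieldType) (phi : L -> L) :
  injective phi -> (forall x y, phi (x + y) = phi x + phi y) ->
  fully_linear phi -> forall a x, phi (a * x) * phi 1 = phi a * phi x.
Proof.
move=> hinj hadd hfull a x.
have p0 := @phi0 _ _ hadd.
have c0 : phi 1 != 0.
  by apply/eqP=> h; have := oner_neq0 L; rewrite -(hinj 1 0) ?eqxx // h p0.
pose w : 'rV[L]_2 := \row_(i < 2) (if i == ord0 then 1 else x).
pose C := [set b *: w | b : L].
have hC : lin_code C.
  split; first by apply/imsetP; exists 0 => //; rewrite scale0r.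
  move=> b y z /imsetP[u _ ->] /imsetP[v _ ->]; apply/imsetP; exists (b * u + v) => //.
  by rewrite scalerDl scalerA.
have [h0 hcl] := hfull 2%N C hC.
have wC : map_mx phi w \in [set map_mx phi c | c in C].
  by apply/imsetP; exists w => //; apply/imsetP; exists 1 => //; rewrite scale1r.
have := hcl (phi a / phi 1) _ _ wC h0.
case/imsetP=> c /imsetP[u _ ->] /matrixP E.
have E0 := E 0 0; have E1 := E 0 1.
rewrite !mxE /= addr0 mulr1 in E0; rewrite !mxE /= addr0 in E1.
have ua : u = a by apply: hinj; rewrite -E0 divfK.
by rewrite -ua -E1 -ua mulrAC divfK.
Qed.

Lemma map_mxM_gen (L : fieldType) (f : L -> L) :
  (forall x y, f (x + y) = f x + f y) -> (forall x y, f (x * y) = f x * f y) ->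
  forall a b c (A : 'M[L]_(a, b)) (B : 'M[L]_(b, c)),
    map_mx f (A *m B) = map_mx f A *m map_mx f B.
Proof.
move=> hadd hmul a b c A B; apply/matrixP=> i j; rewrite !mxE.
rewrite (big_morph f hadd (@phi0 _ _ hadd)); apply: eq_bigr => k _; by rewrite hmul !mxE.
Qed.

Theorem mainTheorem7 (L : finFieldType) (q m n k : nat)
  (hq : (1 < q)%N) (hm : (1 <= m)%N) (hn : n = (2 * m)%N)
  (hcard : #|L| = (q ^ n)%N) (hk1 : (1 <= k)%N) (hkn : (k <= n)%N)
  (g : L) (hg : normal_elt q n g)
  (M : 'M[L]_n) (hMc : is_circulant M) (hMu : M \in unitmx)
  (phi : L -> L) (hphi : lin_automorphism (q ^ m) phi)
  (hfull : fully_linear phi) :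
  let G : 'M[L]_(k, n) := circP k (gvec q n g) in
  map_mx phi M \in unitmx /\
  exists j : nat, (j <= 1)%N /\
    map_mx phi (G *m M) *m invmx (map_mx phi M)
      = map_mx (fun x => x ^+ (q ^ (m * j))) G.
Proof.
move=> G.
have [[phiinv hK _] [hadd hlin]] := hphi.
have hinj : injective phi by apply: can_inj hK.
have p0 := @phi0 _ _ hadd.
have hkey := @key _ _ hinj hadd hfull.
have c0 : phi 1 != 0.
  by apply/eqP=> h; have := oner_neq0 L; rewrite -(hinj 1 0) ?eqxx // h p0.
set c := phi 1.
pose psi x := phi x / c.
have psiD x y : psi (x + y) = psi x + psi y by rewrite /psi hadd mulrDl.
have psiM x y : psi (x * y) = psi x * psi y.
  by rewrite /psi -[phi (x * y)](mulfK c0) /c hkey; field.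
have psi1 : psi 1 = 1 by rewrite /psi divff.
have psiX x e : psi (x ^+ e) = psi x ^+ e.
  by elim: e => [|e IH]; rewrite ?expr0 ?psi1 // !exprS psiM IH.
set Q := (q ^ m)%N.
have psiF a : a ^+ Q = a -> psi a = a.
  by move=> ha; rewrite /psi -{1}[a]mulr1 (hlin a 1 ha) mulfK.
have n0 : (0 < n)%N by rewrite hn muln_gt0.
have QQ (x : L) : x ^+ Q ^+ Q = x.
  rewrite -exprM /Q -expnD addnn -mul2n -hn -hcard.
  exact: expf_card.
have FQ (x y : L) : (x + y) ^+ Q = x ^+ Q + y ^+ Q by apply: (@frobQ _ _ _ m hcard n0).
have two x : psi x = x \/ psi x = x ^+ Q.
  have hs : psi (x + x ^+ Q) = x + x ^+ Q by apply: psiF; rewrite FQ QQ addrC.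
  have hp : psi (x * x ^+ Q) = x * x ^+ Q by apply: psiF; rewrite exprMn QQ mulrC.
  rewrite psiD psiX in hs; rewrite psiM psiX in hp.
  have : (psi x - x) * (psi x - x ^+ Q) = 0.
    have -> : (psi x - x) * (psi x - x ^+ Q) =
      psi x * psi x - (x + x ^+ Q) * psi x + x * x ^+ Q by ring.
    by rewrite -hs -hp; ring.
  by move/eqP; rewrite mulf_eq0 => /orP[] /eqP/subr0_eq h; [left|right].
have [j [j1 hj]] : exists j, (j <= 1)%N /\ forall x, psi x = x ^+ (q ^ (m * j)).
  case: (pickP (fun x => psi x != x)) => [a /= ha|h].
    exists 1%N; split => // b; rewrite muln1 -/Q.
    have psia : psi a = a ^+ Q by case: (two a) => // h; rewrite h eqxx in ha.
    case: (two b) => // hb; case: (two (a + b)); rewrite psiD psia hb.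
      by move/addIr => e; rewrite psia e eqxx in ha.
    by rewrite FQ => /addrI <-.
  by exists 0%N; split => // x; rewrite muln0 expn0 expr1; apply/eqP/negbFE/h.
have phiE x : phi x = c * psi x by rewrite /psi mulrC divfK.
have mphi a b (A : 'M[L]_(a, b)) : map_mx phi A = c *: map_mx psi A.
  by apply/matrixP=> i l; rewrite !mxE phiE.
have psi0 : psi 0 = 0 by rewrite /psi p0 mul0r.
have mM := @map_mxM_gen _ _ psiD psiM.
have Mpu : map_mx psi M \in unitmx.
  have : map_mx psi M *m map_mx psi (invmx M) = 1%:M.
    rewrite -mM mulmxV //; apply/matrixP=> i l; rewrite !mxE.
    by case: (i == l); rewrite ?psi1 ?psi0.
  by case/mulmx1_unit.
have cu : c \is a GRing.unit by rewrite unitfE.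
have Mu : map_mx phi M \in unitmx by rewrite mphi unitmxZ.
split => //; exists j; split => //.
rewrite !mphi invmxZ ?unitmxZ // mM -scalemxAl -scalemxAr scalerA mulfV // scale1r.
rewrite mulmxK //; apply/matrixP=> i l; by rewrite !mxE hj.
Qed.
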